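(* Let $k,n,m,\mu$ be positive integers such that $m\ge n-2$, $n\ge4$ if $m=n-2$, and $k\ge\mu(n+m-1)/2$. Let $\mathcal{A}$ be a strict partial path decomposition of $\mu K_n$ of size $k$ in which at most $\mu(m-1)/2$ colour classes are $2$-factors of $\mu K_n$. Then some edge of $\mu K_n$ not in $\mathcal{A}$ can be added to one of the colour classes of $\mathcal{A}$ so that the result $\mathcal{A}'$ is a partial path decomposition of $\mu K_n$ of size $k$ in which at most $\mu(m-1)/2$ colour classes are $2$-factors of $\mu K_n$.
   Context: Graphs may have multiple edges. $\mu K_n$ is the loopless multigraph on $n$ vertices with every pair of distinct vertices joined by exactly $\mu$ edges. A decomposition of size $k$ of a graph $G$ is an ordered $k$-tuple $(G(1),\dots,G(k))$ of spanning subgraphs (colour classes; possibly edgeless) with pairwise disjoint edge sets whose union is $E(G)$. A partial decomposition of $\mu K_n$ is a decomposition of some spanning subgraph of $\mu K_n$; it is strict if that subgraph is a proper subgraph of $\mu K_n$. A partial path decomposition is one in which every colour class is a vertex-disjoint union of paths and cycles (two parallel edges form a cycle of length 2). A $2$-factor of $\mu K_n$ is a $2$-regular spanning subgraph (its cycles may have length 2). *)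

(* Defs.v *)
From mathcomp Require Import all_boot.
Set Implicit Arguments. Unset Strict Implicit. Unset Printing Implicit Defensive.

(* Edges of mu K_n : an unordered pair {u,v} (u < v) of vertices of 'I_n,
   together with a label in 'I_mu distinguishing the mu parallel edges. *)
Definition edge (n mu : nat) : finType :=
  {x : ('I_n * 'I_n) * 'I_mu | (x.1.1 < x.1.2)%N}.

Definition eu n mu (e : edge n mu) : 'I_n := (val e).1.1.
Definition ev n mu (e : edge n mu) : 'I_n := (val e).1.2.

Definition joins n mu (e : edge n mu) (x y : 'I_n) : bool :=
  ((eu e == x) && (ev e == y)) || ((eu e == y) && (ev e == x)).

Definition is_path n mu (s : seq 'I_n) (t : seq (edge n mu)) : Prop :=
  [/\ (2 <= size s)%N, size t = (size s).-1, uniq s, uniq t &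
      forall i, (i < size t)%N ->
        forall x0 e0, joins (nth e0 t i) (nth x0 s i) (nth x0 s i.+1)].

(* A cycle piece: distinct vertices s_0..s_{l-1} (l >= 2), distinct edges
   t_0..t_{l-1}, t_i joining s_i and s_{(i+1) mod l}.
   (l = 2 gives a cycle formed by two parallel edges.) *)
Definition is_cycle n mu (s : seq 'I_n) (t : seq (edge n mu)) : Prop :=
  [/\ (2 <= size s)%N, size t = size s, uniq s, uniq t &
      forall i, (i < size t)%N ->
        forall x0 e0, joins (nth e0 t i) (nth x0 s i) (nth x0 s (i.+1 %% size s))].

(* The spanning subgraph with edge set H is a vertex-disjoint union of paths
   and cycles: pieces (cycle?, vertices, edges). *)
Definition paths_and_cycles n mu (H : {set edge n mu}) : Prop :=
  exists pcs : seq (bool * seq 'I_n * seq (edge n mu)),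
    [/\ forall p, p \in pcs ->
          (if p.1.1 then is_cycle p.1.2 p.2 else is_path p.1.2 p.2),
        forall i j, (i < size pcs)%N -> (j < size pcs)%N -> i <> j ->
          forall p0 x, x \in (nth p0 pcs i).1.2 -> x \notin (nth p0 pcs j).1.2 &
        forall e, e \in H <-> exists2 p, p \in pcs & e \in p.2].

Definition deg n mu (H : {set edge n mu}) (v : 'I_n) : nat :=
  #|[set e in H | (eu e == v) || (ev e == v)]|.

Definition two_factor n mu (H : {set edge n mu}) : bool :=
  [forall v, deg H v == 2].

(* A partial decomposition of size k of mu K_n: each edge of mu K_n receives
   a colour in 'I_k or is left out (None). *)
Definition pdecomp n mu k := {ffun edge n mu -> option 'I_k}.

Definition colour_class n mu k (A : pdecomp n mu k) (c : 'I_k) : {set edge n mu} :=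
  [set e | A e == Some c].

Definition strict n mu k (A : pdecomp n mu k) : Prop := exists e, A e = None.

Definition partial_path_decomp n mu k (A : pdecomp n mu k) : Prop :=
  forall c, paths_and_cycles (colour_class A c).

Definition n_two_factors n mu k (A : pdecomp n mu k) : nat :=
  #|[set c : 'I_k | two_factor (colour_class A c)]|.

Definition add_edge n mu k (A : pdecomp n mu k) (e : edge n mu) (c : 'I_k)
  : pdecomp n mu k :=
  [ffun x => if x == e then Some c else A x].

(* Main.v *)
Require Import Defs.
From mathcomp Require Import all_boot zify.
Set Implicit Arguments. Unset Strict Implicit. Unset Printing Implicit Defensive.


Ltac normsize := repeat (match goal with
  | |- context[@size ?T ?t] => progress change (@size T t) with (size t)
  | H : context[@size ?T ?t] |- _ => progress change (@size T t) with (size t) in H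
  end).
Ltac slia := normsize; lia.

Section S.
Variables (n mu : nat).
Notation E := (edge n mu).

Definition chain (s : seq 'I_n) (t : seq E) : Prop :=
  [/\ (0 < size s)%N, size t = (size s).-1, uniq s, uniq t &
      forall i, (i < size t)%N ->
        forall x0 e0, joins (nth e0 t i) (nth x0 s i) (nth x0 s i.+1)].

Lemma joinsC (e : E) x y : joins e x y = joins e y x.
Proof. by rewrite /joins orbC. Qed.

Lemma path_chain s t : is_path s t -> chain s t.
Proof. by case=> h1 h2 h3 h4 h5; split=> //; lia. Qed.

Lemma chain_path s t : chain s t -> (2 <= size s)%N -> is_path s t.
Proof. by case=> h1 h2 h3 h4 h5 h; split. Qed.

Lemma chain_rev s t : chain s t -> chain (rev s) (rev t).
Proof.
case=> h1 h2 h3 h4 h5; split; rewrite ?size_rev ?rev_uniq //.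
move=> i hi x0 e0.
rewrite nth_rev // nth_rev; last by lia.
rewrite nth_rev; last by lia.
rewrite joinsC.
have -> : (size s - i.+2 = size t - i.+1)%N by lia.
have -> : (size s - i.+1 = (size t - i.+1).+1)%N by lia.
apply: h5; lia.
Qed.

Lemma chain_cat s1 t1 s2 t2 (e : E) :
  chain s1 t1 -> chain s2 t2 ->
  (forall x, x \in s1 -> x \notin s2) ->
  (forall f, f \in t1 -> f \notin t2) ->
  e \notin t1 -> e \notin t2 ->
  (forall x0, joins e (nth x0 s1 (size s1).-1) (nth x0 s2 0)) ->
  chain (s1 ++ s2) (t1 ++ e :: t2).
Proof.
case=> a1 a2 a3 a4 a5; case=> b1 b2 b3 b4 b5 ds dt et1 et2 J; split.
- rewrite size_cat; lia.
- rewrite !size_cat; change (size (e :: t2)) with (size t2).+1; lia.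
- rewrite cat_uniq a3 b3 /= andbT; apply/hasPn => x /= xs2.
  by apply/negP => /ds; rewrite xs2.
- rewrite cat_uniq a4 /= b4 et2 /= andbT negb_or et1 /=; apply/hasPn => f ft2; apply/negP => ft1.
  by move: (dt f ft1); rewrite ft2.
move=> i; rewrite size_cat; change (size (e :: t2)) with (size t2).+1 => hi x0 e0.
have ht := a2; have hs := b2.
case: (ltnP i (size t1)) => hi1.
  have h1 : i < size s1 by lia.
  have h2 : i.+1 < size s1 by lia.
  rewrite !nth_cat hi1 h1 h2; exact: a5.
case: (ltnP (size t1) i) => hi2.
  have h1 : i < size s1 = false by apply/negP; lia.
  have h2 : i.+1 < size s1 = false by apply/negP; lia.
  have h3 : i < size t1 = false by apply/negP; lia.
  rewrite !nth_cat h1 h2 h3.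
  have -> : i - size t1 = (i - size t1 - 1).+1 by lia.
  have -> : i - size s1 = i - size t1 - 1 by lia.
  have -> : i.+1 - size s1 = (i - size t1 - 1).+1 by lia.
  apply: b5; lia.
have ei : i = size t1 by lia.
subst i.
have h1 : size t1 < size s1 by lia.
have h2 : (size t1).+1 < size s1 = false by apply/negP; lia.
rewrite !nth_cat ltnn h1 h2 subnn.
have -> : (size t1).+1 - size s1 = 0 by lia.
rewrite a2; exact: J.
Qed.

Lemma chain_cycle s t (e : E) : chain s t -> (2 <= size s)%N -> e \notin t ->
  (forall x0, joins e (nth x0 s (size s).-1) (nth x0 s 0)) ->
  is_cycle s (rcons t e).
Proof.
case=> a1 a2 a3 a4 a5 h2 et J; split => //.
- by rewrite size_rcons a2; lia.
- by rewrite rcons_uniq et.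
move=> i; rewrite size_rcons => hi x0 e0; rewrite nth_rcons.
case: (ltnP i (size t)) => hi1.
  rewrite modn_small; last by lia. exact: a5.
have ei : i = size t by lia.
subst i; rewrite eqxx.
have -> : (size t).+1 = size s by lia.
rewrite modnn a2; apply: J.
Qed.

End S.

Section S2.
Variables (n mu : nat).
Notation E := (edge n mu).

Definition touch (x : 'I_n) (f : E) := (eu f == x) || (ev f == x).

Lemma joins_touchl (f : E) x y : joins f x y -> touch x f.
Proof. by rewrite /joins /touch => /orP [/andP [/eqP -> _]|/andP [_ /eqP ->]]; rewrite eqxx ?orbT. Qed.

Lemma joins_touchr (f : E) x y : joins f x y -> touch y f.
Proof. by rewrite joinsC; apply: joins_touchl. Qed.

Lemma joins_ends (f : E) x y (s : seq 'I_n) : joins f x y -> x \in s -> y \in s ->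
  (eu f \in s) && (ev f \in s).
Proof.
by rewrite /joins => /orP [/andP [/eqP -> /eqP ->]|/andP [/eqP -> /eqP ->]] -> ->.
Qed.

Lemma deg_ge2 (H : {set E}) x f1 f2 : f1 \in H -> f2 \in H -> f1 != f2 ->
  touch x f1 -> touch x f2 -> (2 <= deg H x)%N.
Proof.
move=> h1 h2 nf t1 t2; rewrite /deg.
apply: leq_trans (_ : #|[set f1; f2]| <= _)%N; first by rewrite cards2 nf.
apply: subset_leq_card; apply/subsetP => y; rewrite !inE.
by case/orP => /eqP ->; rewrite ?h1 ?h2 -?/(touch x _) ?t1 ?t2.
Qed.

Lemma chain_interior (H : {set E}) s t i x0 : chain s t -> {subset t <= H} ->
  (0 < i)%N -> (i.+1 < size s)%N -> (2 <= deg H (nth x0 s i))%N.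
Proof.
case=> a1 a2 a3 a4 a5 sub hi0 hi.
have e0 : E. { destruct t as [|f tt]. { simpl in a2; slia. } exact f. }
have j1 := a5 i.-1 ltac:(slia) x0 e0.
have j2 := a5 i ltac:(slia) x0 e0.
have ei : i.-1.+1 = i by slia. rewrite ei in j1.
apply: (deg_ge2 (f1 := nth e0 t i.-1) (f2 := nth e0 t i)).
- by apply: sub; apply: mem_nth; slia.
- by apply: sub; apply: mem_nth; slia.
- rewrite nth_uniq //; slia.
- exact: joins_touchr j1.
- exact: joins_touchl j2.
Qed.

Lemma cycle_deg (H : {set E}) s t x : is_cycle s t -> {subset t <= H} ->
  x \in s -> (2 <= deg H x)%N.
Proof.
case=> a1 a2 a3 a4 a5 sub xs.
have e0 : E. { destruct t as [|f tt]. { simpl in a2; slia. } exact f. }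
have ex := nth_index x xs; set i := index x s in ex.
have hi : (i < size s)%N by rewrite index_mem.
have mem : forall j, (j < size t)%N -> nth e0 t j \in H.
  by move=> j hj; apply: sub; apply: mem_nth.
case: (posnP i) => [i0|ip].
  have j1 := a5 0 ltac:(slia) x e0.
  have j2 := a5 (size t).-1 ltac:(slia) x e0.
  have ei : (size t).-1.+1 = size s by slia. rewrite ei modnn in j2.
  have e1 : 1 %% size s = 1 by rewrite modn_small; slia. rewrite e1 in j1.
  apply: (deg_ge2 (f1 := nth e0 t 0) (f2 := nth e0 t (size t).-1)).
  - apply: mem; slia.
  - apply: mem; slia.
  - rewrite nth_uniq //; slia.
  - by rewrite -ex i0; exact: joins_touchl j1.
  - by rewrite -ex i0; exact: joins_touchr j2.
have j1 := a5 i.-1 ltac:(slia) x e0.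
have j2 := a5 i ltac:(slia) x e0.
have ei : i.-1.+1 = i by slia. rewrite ei (modn_small hi) in j1.
apply: (deg_ge2 (f1 := nth e0 t i.-1) (f2 := nth e0 t i)).
- apply: mem; slia.
- apply: mem; slia.
- rewrite nth_uniq //; slia.
- by rewrite -ex; exact: joins_touchr j1.
- by rewrite -ex; exact: joins_touchl j2.
Qed.

Definition valid (p : bool * seq 'I_n * seq E) :=
  if p.1.1 then is_cycle p.1.2 p.2 else is_path p.1.2 p.2.

Lemma valid_size p : valid p -> (2 <= size p.1.2)%N.
Proof. by rewrite /valid; case: p.1.1 => -[]. Qed.

Lemma valid_ends p f : valid p -> f \in p.2 -> (eu f \in p.1.2) && (ev f \in p.1.2).
Proof.
move=> V fi; have sz := valid_size V; move: V.
rewrite /valid.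
have ex := nth_index f fi; set i := index f p.2 in ex.
have hi : (i < size p.2)%N by rewrite index_mem.
have x0 : 'I_n. { destruct p as [[b ss] tt]; destruct ss as [|y yy]; [simpl in sz; slia| exact y]. }
case: p.1.1 => -[a1 a2 a3 a4 a5].
  have := a5 i hi x0 f; rewrite ex => J; apply: (joins_ends J); apply: mem_nth.
    by rewrite -a2.
  by rewrite ltn_pmod //; slia.
have := a5 i hi x0 f; rewrite ex => J; apply: (joins_ends J); apply: mem_nth; slia.
Qed.

End S2.

Section S3.
Variables (n mu : nat).
Notation E := (edge n mu).
Notation piece := (bool * seq 'I_n * seq E)%type.

Lemma ex_ord (s : seq 'I_n) : (0 < size s)%N -> {x : 'I_n | x \in s}.
Proof. by case: s => [//|y s'] _; exists y; rewrite inE eqxx. Qed.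

Definition PC (H : {set E}) (pcs : seq piece) : Prop :=
  [/\ forall p, p \in pcs -> valid p, uniq pcs,
      forall p q, p \in pcs -> q \in pcs -> p != q ->
        forall x, x \in p.1.2 -> x \notin q.1.2 &
      forall e, e \in H <-> exists2 p, p \in pcs & e \in p.2].

Lemma pc_iff H : paths_and_cycles H <-> exists pcs, PC H pcs.
Proof.
split.
  case=> pcs [V D Ed]; exists pcs.
  have U : uniq pcs.
    apply/(uniqP (true, [::], [::])) => i j; rewrite !inE => hi hj eij.
    apply/eqP/negP => /negP nij.
    have v := V _ (mem_nth (true, [::], [::]) hi).
    have sz := valid_size v.
    have [x0 x0i] := ex_ord (ltnW sz).
    have := D i j hi hj (fun e => elimN eqP nij e) (true, [::], [::]) x0 x0i.
    by rewrite -eij x0i.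
  split=> // p q pin qin pq x xp.
  have hij : index p pcs <> index q pcs.
    by move=> ei; move: pq; rewrite -(nth_index p pin) -(nth_index p qin) ei eqxx.
  have := D (index p pcs) (index q pcs) _ _ hij p x; rewrite !index_mem !nth_index //.
  by apply.
case=> pcs [V U D Ed]; exists pcs; split => // i j hi hj nij p0 x.
apply: D; try exact: mem_nth.
by rewrite nth_uniq //; apply/eqP.
Qed.

Lemma pc_sub H pcs p : PC H pcs -> p \in pcs -> {subset p.2 <= H}.
Proof. by case=> _ _ _ Ed pin f fp; apply/Ed; exists p. Qed.

Lemma pc_unique H pcs p q x : PC H pcs -> p \in pcs -> q \in pcs ->
  x \in p.1.2 -> x \in q.1.2 -> p = q.
Proof.
case=> _ _ D _ pin qin xp xq; apply/eqP/negPn/negP => pq.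
by move: (D p q pin qin pq x xp); rewrite xq.
Qed.

Lemma chain_endpoint (H : {set E}) (s : seq 'I_n) (t : seq E) x : chain s t -> {subset t <= H} -> x \in s ->
  (deg H x <= 1)%N -> x = nth x s 0 \/ x = nth x s (size s).-1.
Proof.
move=> C sub xs dg.
have ex := nth_index x xs; set i := index x s in ex.
have hi : (i < size s)%N by rewrite index_mem.
case: (posnP i) => [i0|ip]; first by left; rewrite -{1}ex i0.
case: (ltnP i.+1 (size s)) => hi2.
  by have := chain_interior x C sub ip hi2; rewrite ex; slia.
right; rewrite -{1}ex; congr nth; slia.
Qed.

Lemma pc_endpoint H pcs p x : PC H pcs -> p \in pcs -> x \in p.1.2 ->
  (deg H x <= 1)%N ->
  p.1.1 = false /\ (x = nth x p.1.2 0 \/ x = nth x p.1.2 (size p.1.2).-1).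
Proof.
move=> P pin xp dg; have V : valid p by case: P => V _ _ _; apply: V.
have sub := pc_sub P pin.
move: V; rewrite /valid; case: p.1.1 => V.
  by have := cycle_deg V sub xp; slia.
by split => //; apply: (chain_endpoint (path_chain V) sub xp dg).
Qed.

Lemma endpoint_chain H pcs u : PC H pcs -> (deg H u <= 1)%N ->
  exists sa ta, [/\ chain sa ta, nth u sa (size sa).-1 = u,
    (forall x, x \in sa <-> x = u \/ exists2 p, p \in pcs & (u \in p.1.2) && (x \in p.1.2)) &
    (forall f, f \in ta <-> exists2 p, p \in pcs & (u \in p.1.2) && (f \in p.2))].
Proof.
move=> P dg.
case: (boolP (has (fun p => u \in p.1.2) pcs)) => [/hasP [p pin up]| /hasPn nu].
  have [pc ends] := pc_endpoint P pin up dg.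
  have V : valid p by case: P => V _ _ _; apply: V.
  move: V; rewrite /valid pc => V; have C := path_chain V.
  have mems : forall x, (x \in p.1.2) <-> (x = u \/ exists2 q, q \in pcs & (u \in q.1.2) && (x \in q.1.2)).
    move=> x; split => [xp|]; first by right; exists p => //; rewrite up xp.
    case=> [->//|[q qin /andP [uq xq]]].
    by rewrite (pc_unique P pin qin up uq).
  have memt : forall f, (f \in p.2) <-> exists2 q, q \in pcs & (u \in q.1.2) && (f \in q.2).
    move=> f; split => [fp|]; first by exists p => //; rewrite up fp.
    case=> [q qin /andP [uq fq]].
    by rewrite (pc_unique P pin qin up uq).
  case: ends => [eh|el].
    exists (rev p.1.2), (rev p.2); split.
    - exact: chain_rev.
    - have a1 : (0 < size p.1.2)%N by case: C.
      rewrite size_rev nth_rev; last by slia.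
      have -> : (size p.1.2 - (size p.1.2).-1.+1 = 0)%N by slia.
      by rewrite -eh.
    - by move=> x; rewrite mem_rev.
    - by move=> f; rewrite mem_rev.
  by exists p.1.2, p.2; split.
exists [:: u], [::]; split => //.
- move=> x; rewrite inE; split; first by move/eqP; left.
  case=> [->//|[q qin /andP [uq _]]].
  by move: (nu q qin); rewrite uq.
- move=> f; rewrite in_nil; split => //; case=> [q qin /andP [uq _]].
  by move: (nu q qin); rewrite uq.
Qed.

End S3.

Section S4.
Variables (n mu : nat).
Notation E := (edge n mu).
Notation piece := (bool * seq 'I_n * seq E)%type.

Lemma assemble (H : {set E}) pcs (e : E) (u v : 'I_n) (np : piece) :
  PC H pcs -> valid np -> u \in np.1.2 ->
  (forall x, x \in np.1.2 -> x = u \/ x = v \/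
      exists2 R, R \in pcs & ((u \in R.1.2) || (v \in R.1.2)) && (x \in R.1.2)) ->
  (forall f, f \in np.2 <-> f = e \/
      exists2 R, R \in pcs & ((u \in R.1.2) || (v \in R.1.2)) && (f \in R.2)) ->
  PC (e |: H) (np :: [seq p <- pcs | (u \notin p.1.2) && (v \notin p.1.2)]).
Proof.
move=> P Vn unp Mv Me; have [V U D Ed] := P.
set rest := [seq p <- pcs | _].
have restE : forall q, q \in rest -> [/\ q \in pcs, u \notin q.1.2 & v \notin q.1.2].
  by move=> q; rewrite mem_filter => /andP [/andP [a b] c].
have dnp : forall q, q \in rest -> forall x, x \in np.1.2 -> x \notin q.1.2.
  move=> q /restE [qin uq vq] x /Mv [->//|[->//|[R Rin /andP [/orP [uR|vR] xR]]]].
    apply: (D R q Rin qin) => //; apply/negP => /eqP eRq; by rewrite -eRq uR in uq.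
  apply: (D R q Rin qin) => //; apply/negP => /eqP eRq; by rewrite -eRq vR in vq.
split.
- move=> p; rewrite inE => /orP [/eqP ->//|/restE [pin _ _]]; exact: V.
- rewrite /= filter_uniq // andbT; apply/negP => /restE [_ /negP []].
  done.
- move=> p q; rewrite !inE => /orP [/eqP ->|pr] /orP [/eqP ->|qr].
  + by rewrite eqxx.
  + by move=> _; apply: dnp.
  + move=> _ x xp; apply/negP => xn; by move: (dnp p pr x xn); rewrite xp.
  + have [pin _ _] := restE p pr; have [qin _ _] := restE q qr; exact: D.
move=> f; rewrite in_setU1; split.
  case/orP => [/eqP ->|/Ed [R Rin fR]].
    by exists np; rewrite ?inE ?eqxx //; apply/Me; left.
  case: (boolP ((u \in R.1.2) || (v \in R.1.2))) => huv.
    by exists np; rewrite ?inE ?eqxx //; apply/Me; right; exists R => //; rewrite huv fR.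
  exists R => //; rewrite inE mem_filter -negb_or huv Rin /= orbT //.
case=> p; rewrite inE => /orP [/eqP ->|pr].
  move/Me => [->|[R Rin /andP [_ fR]]]; first by rewrite eqxx.
  by apply/orP; right; apply/Ed; exists R.
have [pin _ _] := restE p pr.
by move=> fp; apply/orP; right; apply/Ed; exists p.
Qed.

Lemma nth_def (s : seq 'I_n) i (x y : 'I_n) : (i < size s)%N -> nth x s i = nth y s i.
Proof. exact: set_nth_default. Qed.

Lemma pc_add (H : {set E}) (e : E) : paths_and_cycles H -> e \notin H ->
  (deg H (eu e) <= 1)%N -> (deg H (ev e) <= 1)%N -> paths_and_cycles (e |: H).
Proof.
move=> /pc_iff [pcs P] eH du dv; apply/pc_iff.
set u := eu e in du *; set v := ev e in dv *.
have huv : u != v.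
  rewrite /u /v /eu /ev; apply/negP => /eqP E1.
  by have := valP e; rewrite E1 ltnn.
have Juv : joins e u v by rewrite /joins !eqxx.
have [V U D Ed] := P.
have [sa [ta [Ca la Msa Mta]]] := endpoint_chain P du.
have taH : {subset ta <= H}.
  by move=> f /Mta [R Rin /andP [_ fR]]; apply: (pc_sub P Rin).
have eta : e \notin ta by apply/negP => /taH; rewrite (negbTE eH).
have ua : u \in sa by apply/Msa; left.
case: (boolP (has (fun p => (u \in p.1.2) && (v \in p.1.2)) pcs)) => [/hasP [Pp Pin /andP [uP vP]]| /hasPn nb].
  have va : v \in sa by apply/Msa; right; exists Pp => //; rewrite uP vP.
  have sz : (0 < size sa)%N by case: Ca.
  have sz2 : (2 <= size sa)%N.
    case: sa {Ca la Msa taH} ua va sz => [//|w [|w' s']] //.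
    by rewrite !inE => /eqP E0 /eqP E1; rewrite E0 E1 eqxx in huv.
  have hv0 : v = nth v sa 0.
    case: (chain_endpoint Ca taH va dv) => // hl.
    have E1 : nth v sa (size sa).-1 = u by rewrite (nth_def _ u) //; slia.
    by move: huv; rewrite hl E1 eqxx.
  exists ((true, sa, rcons ta e) :: [seq p <- pcs | (u \notin p.1.2) && (v \notin p.1.2)]).
  apply: assemble => //.
  - rewrite /valid /=; apply: chain_cycle => // x0.
    rewrite (nth_def _ u) ?la; last by slia.
    by rewrite (nth_def _ v) -?hv0 //; slia.
  - by move=> x /Msa [->|[R Rin /andP [uR xR]]]; [left|right; right; exists R => //; rewrite uR xR /=].
  - move=> f; rewrite /= mem_rcons inE; split.
      case/orP => [/eqP ->|/Mta [R Rin /andP [uR fR]]]; [by left|right; exists R => //; rewrite uR fR //=].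
    case=> [->|[R Rin /andP [/orP [uR|vR] fR]]]; first by rewrite eqxx.
      by apply/orP; right; apply/Mta; exists R => //; rewrite uR fR.
    have eR := pc_unique P Rin Pin vR vP; subst R.
    by apply/orP; right; apply/Mta; exists Pp => //; rewrite uP fR.
have [sb0 [tb0 [Cb0 lb0 Msb0 Mtb0]]] := endpoint_chain P dv.
set sb := rev sb0; set tb := rev tb0.
have Cb : chain sb tb by apply: chain_rev.
have szb : (0 < size sb0)%N by case: Cb0.
have szA : (0 < size sa)%N by case: Ca.
have hb : forall x0, nth x0 sb 0 = v.
  move=> x0; rewrite /sb nth_rev // subn1 (nth_def _ v) //; slia.
have tbH : {subset tb <= H}.
  by move=> f; rewrite mem_rev => /Mtb0 [R Rin /andP [_ fR]]; apply: (pc_sub P Rin).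
have etb : e \notin tb by apply/negP => /tbH; rewrite (negbTE eH).
have Msb : forall x, x \in sb <-> x = v \/ exists2 p, p \in pcs & (v \in p.1.2) && (x \in p.1.2).
  by move=> x; rewrite mem_rev; apply: Msb0.
have Mtb : forall f, f \in tb <-> exists2 p, p \in pcs & (v \in p.1.2) && (f \in p.2).
  by move=> f; rewrite mem_rev; apply: Mtb0.
have noboth : forall R, R \in pcs -> u \in R.1.2 -> v \in R.1.2 -> False.
  by move=> R Rin uR vR; move: (nb R Rin); rewrite uR vR.
exists ((false, sa ++ sb, ta ++ e :: tb) :: [seq p <- pcs | (u \notin p.1.2) && (v \notin p.1.2)]).
apply: assemble => //.
- rewrite /valid /=; apply: chain_path; last by rewrite size_cat /sb size_rev; slia.
  apply: chain_cat => //.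
  + move=> x /Msa xa; apply/negP => /Msb xb.
    case: xa xb => [->|[R Rin /andP [uR xR]]] [|[Q Qin /andP [vQ xQ]]].
    * by move=> E1; rewrite E1 eqxx in huv.
    * exact: (noboth Q Qin).
    * by move=> E1; apply: (noboth R Rin) => //; rewrite E1 in xR.
    * have eRQ := pc_unique P Rin Qin xR xQ; subst Q.
      exact: (noboth R Rin).
  + move=> f /Mta [R Rin /andP [uR fR]]; apply/negP => /Mtb [Q Qin /andP [vQ fQ]].
    have /andP [eR _] := valid_ends (V R Rin) fR.
    have /andP [eQ _] := valid_ends (V Q Qin) fQ.
    have eRQ := pc_unique P Rin Qin eR eQ; subst Q.
    exact: (noboth R Rin).
  + move=> x0; rewrite hb (nth_def _ u) ?la //; slia.
- by rewrite /= mem_cat ua.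
- move=> x; rewrite /= mem_cat => /orP [/Msa [->|[R Rin /andP [uR xR]]]|/Msb [->|[R Rin /andP [vR xR]]]].
  + by left.
  + by right; right; exists R => //; rewrite uR xR.
  + by right; left.
  + by right; right; exists R => //; rewrite vR xR orbT.
- move=> f; rewrite /= mem_cat inE; split.
    case/orP => [/Mta [R Rin /andP [uR fR]]|/orP [/eqP ->|/Mtb [R Rin /andP [vR fR]]]].
    + by right; exists R => //; rewrite uR fR.
    + by left.
    + by right; exists R => //; rewrite vR fR orbT.
  case=> [->|[R Rin /andP [/orP [uR|vR] fR]]]; first by rewrite eqxx orbT.
    by apply/orP; left; apply/Mta; exists R => //; rewrite uR fR.
  by apply/orP; right; apply/orP; right; apply/Mtb; exists R => //; rewrite vR fR.
Qed.

End S4.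

Section S5.
Variables (n mu : nat).
Notation E := (edge n mu).

Lemma sum_bool_card (T : finType) (b : pred T) : \sum_(x : T) (b x : nat) = #|[set x | b x]|.
Proof.
rewrite -sum1dep_card [RHS]big_mkcond /=; apply: eq_bigr => x _; by case: (b x).
Qed.

Lemma sum_classes k (A : pdecomp n mu k) (P : pred E) :
  \sum_(c < k) #|[set e in colour_class A c | P e]| = #|[set e | (A e != None) && P e]|.
Proof.
transitivity (\sum_(c < k) \sum_(x : E) (((A x == Some c) && P x) : nat)).
  apply: eq_bigr => c _; rewrite (sum_bool_card (fun x => (A x == Some c) && P x)).
  by apply: eq_card => x; rewrite !inE.
rewrite -(sum_bool_card (fun e => (A e != None) && P e)).
rewrite exchange_big /=; apply: eq_bigr => x _.
case Ax: (A x) => [c0|] /=.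
  rewrite (bigD1 c0) //= eqxx big1 ?addn0 // => c nc.
  by case: eqP => // -[] E1; rewrite E1 eqxx in nc.
by rewrite big1.
Qed.

Definition other (w : 'I_n) (x : E) := if eu x == w then ev x else eu x.

Lemma eu_lt_ev (x : E) : (eu x < ev x)%N.
Proof. exact: valP x. Qed.

Lemma edge_eq (x y : E) : eu x = eu y /\ ev x = ev y -> (val x).2 = (val y).2 -> x = y.
Proof.
move=> [h1 h2] h3; apply: val_inj; move: h1 h2 h3; rewrite /eu /ev.
by case: (val x) => [[a b] c]; case: (val y) => [[a' b'] c'] /= -> -> ->.
Qed.

Lemma card_touch (w : 'I_n) (W : {set 'I_n}) (S : {set E}) :
  (forall x, x \in S -> touch w x && (other w x \in W)) -> (#|S| <= #|W| * mu)%N.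
Proof.
move=> HS.
pose f (x : E) := (other w x, (val x).2).
have inj : {in S &, injective f}.
  move=> x y xS yS [] eo el.
  have /andP [tx _] := HS x xS; have /andP [ty _] := HS y yS.
  have lx := eu_lt_ev x; have ly := eu_lt_ev y.
  apply: edge_eq => //.
  move: eo tx ty lx ly; rewrite /other /touch.
  case: eqP => [ex|nx]; case: eqP => [ey|ny] /=.
  - by move=> ->; rewrite ex ey.
  - move=> eo _ /eqP ty lx ly; move: lx ly; rewrite eo ty -ex; lia.
  - move=> eo /eqP tx _ lx ly; move: lx ly; rewrite -eo tx -ey; lia.
  - by move=> -> /eqP tx /eqP ty; rewrite tx ty.
have -> : (#|W| * mu = #|setX W [set: 'I_mu]|)%N by rewrite cardsX cardsT card_ord.
rewrite -(card_in_imset inj).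
apply: subset_leq_card; apply/subsetP => p /imsetP [x xS ->].
by rewrite !inE /=; have /andP [_ ->] := HS x xS.
Qed.

Lemma card_touch1 (u : 'I_n) : (#|[set x : E | touch u x]| <= n.-1 * mu)%N.
Proof.
have := card_touch (w := u) (W := [set~ u]) (S := [set x : E | touch u x]).
rewrite cardsC1 card_ord; apply => x; rewrite !inE => tx; rewrite tx /=.
have l := eu_lt_ev x; move: tx; rewrite /other /touch.
case: eqP => [E0|ne] /= => [_|/eqP ev]; apply/eqP => E1.
  by move: l; rewrite E0 E1 ltnn.
by apply: ne.
Qed.

Lemma card_touch2 (u v : 'I_n) : u != v ->
  (#|[set x : E | touch v x && ~~ touch u x]| <= (n - 2) * mu)%N.
Proof.
move=> uv.
have := card_touch (w := v) (W := ~: [set u; v]) (S := [set x : E | touch v x && ~~ touch u x]).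
have -> : #|~: [set u; v]| = n - 2.
  by have := cardsC [set u; v]; rewrite cards2 uv card_ord; lia.
apply => x; rewrite !inE => /andP [tx nu]; rewrite tx /=.
have l := eu_lt_ev x; move: tx nu; rewrite /other /touch.
case: eqP => [E0|ne] /=.
  move=> _ nu; rewrite negb_or; apply/andP; split.
    by apply/negP => /eqP E1; move: nu; rewrite E1 eqxx orbT.
  by apply/negP => /eqP E1; move: l; rewrite E0 E1 ltnn.
move=> /eqP ev nu; rewrite negb_or; apply/andP; split.
  by apply/negP => /eqP E1; move: nu; rewrite E1 eqxx.
by apply/negP => /eqP E1; move: l; rewrite E1 -ev ltnn.
Qed.

End S5.

Lemma class_add n mu k (A : pdecomp n mu k) e c c' : A e = None ->
  colour_class (add_edge A e c) c' =
  if c' == c then e |: colour_class A c else colour_class A c'.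
Proof.
move=> Ae; apply/setP => x; rewrite /colour_class.
case: (eqVneq x e) => [->|nx]; case: (eqVneq c' c) => [->|nc];
  rewrite !inE ffunE ?eqxx ?Ae //= ?(negbTE nx) //.
by apply/eqP => -[] E1; rewrite E1 eqxx in nc.
Qed.

Lemma deg_add n mu (H : {set edge n mu}) e x : e \notin H ->
  deg (e |: H) x = deg H x + touch x e.
Proof.
move=> eH; rewrite /deg; case tx: (touch x e).
  have -> : [set f in e |: H | (eu f == x) || (ev f == x)] =
    e |: [set f in H | (eu f == x) || (ev f == x)].
    apply/setP => f; rewrite !inE; case: (eqVneq f e) => [->|nf] //=.
  by rewrite cardsU1 inE (negbTE eH) /= addnC.
rewrite addn0; apply: eq_card => f; rewrite !inE; case: (eqVneq f e) => [->|nf] //=.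
by rewrite -/(touch x e) tx (negbTE eH).
Qed.

Lemma colour_class_notin n mu k (A : pdecomp n mu k) e c : A e = None ->
  e \notin colour_class A c.
Proof. by move=> Ae; rewrite inE Ae. Qed.

Lemma touch_eu n mu (e : edge n mu) : touch (eu e) e.
Proof. by rewrite /touch eqxx. Qed.
Lemma touch_ev n mu (e : edge n mu) : touch (ev e) e.
Proof. by rewrite /touch eqxx orbT. Qed.

Lemma col_bound n mu k (A : pdecomp n mu k) (P : pred (edge n mu)) e0 :
  A e0 = None -> P e0 ->
  (#|[set e | (A e != None) && P e]| <= #|[set e | P e]| - 1)%N.
Proof.
move=> Ae Pe; have := cardsD1 e0 [set e | P e]; rewrite inE Pe /= => ->.
rewrite add1n subSS subn0; apply: subset_leq_card; apply/subsetP => x.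
rewrite !inE => /andP [nA ->]; rewrite andbT; apply/eqP => E1.
by move: nA; rewrite E1 Ae.
Qed.

Lemma touch_uv_bound n mu (u v : 'I_n) : u != v ->
  (#|[set x : edge n mu | touch u x || touch v x]| <= n.-1 * mu + (n - 2) * mu)%N.
Proof.
move=> uv.
have -> : [set x : edge n mu | touch u x || touch v x] =
  [set x | touch u x] :|: [set x | touch v x && ~~ touch u x].
  by apply/setP => x; rewrite !inE; case: (touch u x); case: (touch v x).
rewrite cardsU; have := card_touch1 mu u; have := card_touch2 mu uv; lia.
Qed.

Theorem lemma5 (k n m mu : nat) :
  (0 < k)%N -> (0 < n)%N -> (0 < m)%N -> (0 < mu)%N ->
  (n <= m + 2)%N ->
  (m + 2 = n -> 4 <= n)%N ->
  (mu * (n + m - 1) <= 2 * k)%N ->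
  forall A : pdecomp n mu k,
    partial_path_decomp A -> strict A ->
    (2 * n_two_factors A <= mu * (m - 1))%N ->
    exists (e : edge n mu) (c : 'I_k),
      [/\ A e = None,
          partial_path_decomp (add_edge A e c) &
          (2 * n_two_factors (add_edge A e c) <= mu * (m - 1))%N].
Proof.
move=> k0 n0 m0 mu0 nm mn kb A ppd [e0 Ae0] tb.
have luv := eu_lt_ev e0.
have huv : eu e0 != ev e0 by apply/negP => /eqP E1; move: luv; rewrite E1 ltnn.
have n2 : (2 <= n)%N by have := ltn_ord (ev e0); lia.
pose t := n_two_factors A.
pose goodb (c : 'I_k) := [&& deg (colour_class A c) (eu e0) <= 1,
  deg (colour_class A c) (ev e0) <= 1 &
  (2 * t.+1 <= mu * (m - 1)) || ~~ two_factor (e0 |: colour_class A c)]%N.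
have nin : forall c, e0 \notin colour_class A c by move=> c; apply: colour_class_notin.
case: (pickP goodb) => [c gc|nogood].
  move: gc => /and3P [du dv alt].
  exists e0, c; split => //.
    move=> c'; rewrite class_add //; case: eqP => _; last exact: ppd.
    exact: pc_add.
  rewrite /n_two_factors.
  case/orP: alt => [tb2|nf].
    apply: leq_trans tb2; rewrite leq_mul2l; apply/orP; right.
    apply: leq_trans (_ : #|c |: [set c' | two_factor (colour_class A c')]| <= _)%N.
      apply: subset_leq_card; apply/subsetP => c'; rewrite !inE class_add //.
      by case: eqP => [->|_ ->]; rewrite ?eqxx ?orbT.
    by rewrite cardsU1 /t /n_two_factors; case: (c \notin _).
  apply: leq_trans tb; rewrite leq_mul2l; apply/orP; right.
  apply: subset_leq_card; apply/subsetP => c'; rewrite !inE class_add //.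
  by case: eqP => [->|//]; rewrite (negbTE nf).
exfalso.
have Su : forall w, \sum_(c < k) deg (colour_class A c) w =
    #|[set e | (A e != None) && touch w e]| := fun w => sum_classes A (touch w).
case: (boolP (2 * t.+1 <= mu * (m - 1))%N) => [tb2|tb2].
  have Sq := sum_classes A (fun e => touch (eu e0) e || touch (ev e0) e).
  have hc := col_bound (P := fun e => touch (eu e0) e || touch (ev e0) e) Ae0 (introT orP (or_introl (touch_eu e0))).
  have hb := touch_uv_bound mu huv.
  have lo : (2 * k <= \sum_(c < k) #|[set e in colour_class A c | touch (eu e0) e || touch (ev e0) e]|)%N.
    have -> : (2 * k = \sum_(c < k) 2)%N by rewrite sum_nat_const card_ord mulnC.
    apply: leq_sum => c _.
    have := nogood c; rewrite /goodb tb2 orTb andbT => /negbT; rewrite negb_and -!ltnNge.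
    case/orP => d2; apply: leq_trans d2 _; apply: subset_leq_card; apply/subsetP => x;
      rewrite !inE => /andP [-> H]; rewrite /touch in H *; by rewrite H ?orbT.
  have e1 : (n.-1 * mu + (n - 2) * mu = (2 * n - 3) * mu)%N by rewrite -mulnDl; congr (_ * _); lia.
  have e2 : ((2 * n - 3) * mu <= mu * (n + m - 1))%N by rewrite mulnC leq_mul2l; apply/orP; right; lia.
  have e3 : (0 < (2 * n - 3) * mu)%N by rewrite muln_gt0; apply/andP; split; lia.
  move: Sq lo hc hb e1 e2 e3 kb; lia.
have lo : (2 * k + 2 * t <= \sum_(c < k) deg (colour_class A c) (eu e0) +
                          \sum_(c < k) deg (colour_class A c) (ev e0))%N.
  rewrite -big_split /= /t /n_two_factors -sum_bool_card.
  have -> : (2 * k = \sum_(c < k) 2)%N by rewrite sum_nat_const card_ord mulnC.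
  rewrite big_distrr -big_split /=.
  apply: leq_sum => c _.
  case: (boolP (two_factor (colour_class A c))) => tf.
    move/forallP: (tf) => h; rewrite (eqP (h (eu e0))) (eqP (h (ev e0))) //.
  have := nogood c; rewrite /goodb (negbTE tb2) /= => /negbT.
  rewrite !negb_and negbK -!ltnNge muln0 addn0.
  case/orP => [d2|/orP [d2|tf2]].
  - by apply: leq_trans d2 (leq_addr _ _).
  - by apply: leq_trans d2 (leq_addl _ _).
  move/forallP: (tf2) => h.
  have := h (eu e0); have := h (ev e0).
  rewrite !deg_add // touch_eu touch_ev /=; lia.
have hu := col_bound (P := touch (eu e0)) Ae0 (touch_eu e0).
have hv := col_bound (P := touch (ev e0)) Ae0 (touch_ev e0).
have cu := card_touch1 mu (eu e0); have cv := card_touch1 mu (ev e0).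
rewrite !Su in lo.
have m2 : (n <= 2 * m)%N by lia.
have e1 : ((n + m - 1) * mu + (m - 1) * mu = (n + 2 * m - 2) * mu)%N by rewrite -mulnDl; congr (_ * _); lia.
have e2 : (2 * (n.-1 * mu) <= (n + 2 * m - 2) * mu)%N by rewrite mulnA leq_mul2r; apply/orP; right; lia.
have e3 : (0 < n.-1 * mu)%N by rewrite muln_gt0; apply/andP; split; lia.
move: tb2; rewrite -ltnNge => tb2.
rewrite [mu * (m - 1)]mulnC in tb2; rewrite [mu * (n + m - 1)]mulnC in kb.
move: lo hu hv cu cv e1 e2 e3 tb2 kb; lia.
Qed.
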